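(* Let $G$ be a structured single-touch computation DAG executed by parsimonious work stealing on $P$ processors, choosing the future thread first at every fork. Let $t$ be the future thread at a fork $v$, let $u$ be the right child of $v$, and let $x$ be the (unique) touch of $t$. If $x$ or $u$ is a deviation, then either $u$ is stolen (taken from a deque by a steal) or some touch by $t$ (a touch node lying in thread $t$) is a deviation.
   Context: Computation model. A future-parallel computation is a finite DAG whose nodes are tasks. Every node has in-degree and out-degree in $\{1,2\}$, except a distinguished root node (in-degree $0$) and a distinguished final node (out-degree $0$). Edges are of three types: continuation edges, future edges and touch edges. A thread is a maximal chain of nodes connected by continuation edges. The main thread begins at the root and ends at the final node. Every other thread $t$ begins at a node with an incoming future edge from a node $v$ of another thread $t'$; then $v$ is the fork of $t$, $t'$ is the parent thread of $t$, and $t$ is the future thread at $v$. A fork $v$ has two children: the first node of $t$ (the left child) and the continuation successor of $v$ in $t'$ (the right child); both have in-degree $1$ and are not touches. The last node of every non-main thread has exactly one outgoing edge, which is a touch edge into another thread. If there is a touch edge from a node $v_1$ of thread $t_1$ to a node $v_2$ of thread $t_2\neq t_1$, and a continuation edge from $u_2$ to $v_2$, then $v_2$ is a touch of $t_1$ (a touch by $t_2$, i.e. it lies in $t_2$), $v_1$ is its future parent, $u_2$ its local parent, $t_1$ its future thread, and the fork of $t_1$ is its corresponding fork. A node $w$ is a descendant of a node $u$ if there is a directed path from $u$ to $w$. A DAG is a structured future-parallel computation if for the future thread $t$ of any fork $v$: (1) the local parents of the touches of $t$ are descendants of $v$, and (2) at least one touch of $t$ is a descendant of the right child of $v$. It is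 a structured single-touch computation if, in addition, each future thread $t$ spawned at a fork $v$ has exactly one touch, and this touch is a descendant of the right child of $v$. Scheduler. In parsimonious work stealing with $P$ processors, each processor has a deque. A node is ready when all its parents have been executed. After executing a node of out-degree 1, a processor continues with its child if that child is ready. After executing a fork, it pushes one child onto the bottom of its deque and executes the other; ''future thread first'' means it executes the left child and pushes the right child. When a processor has no node to execute, it pops the bottom node of its own deque if nonempty, and otherwise steals the top node of the deque of some other processor. The sequential execution is the execution with $P=1$ (same fork policy). Deviation. A node $v_2$ is a deviation in a parallel execution if, letting $v_1$ be the node executed immediately before $v_2$ in the sequential execution, the processor that executes $v_2$ in the parallel execution did not execute $v_1$ immediately before $v_2$. *)

(* Defs.v *)
From HB Require Import structures.
From mathcomp Require Import all_boot.
Set Implicit Arguments. Unset Strict Implicit. Unset Printing Implicit Defensive.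

Record fpdag (V : finType) := FPDag {
  cont : rel V; fut : rel V; tch : rel V; root : V; final : V }.

Section DAG.
Variables (V : finType) (G : fpdag V).

Definition edge : rel V := fun u w => [|| cont G u w, fut G u w | tch G u w].
Definition indeg (w : V) := #|[pred u | edge u w]|.
Definition outdeg (u : V) := #|[pred w | edge u w]|.
Definition descendant (u w : V) := connect edge u w.
(* u and w lie on the same maximal continuation chain (thread) *)
Definition same_thread (u w : V) := connect (cont G) u w || connect (cont G) w u.
Definition has_cont_pred (w : V) := [exists u, cont G u w].
Definition has_cont_succ (u : V) := [exists w, cont G u w].
Definition is_fork (v : V) := [exists l, fut G v l].
Definition is_touch (x : V) :=
  [exists v1, [exists u2, [&& tch G v1 x, ~~ same_thread v1 x & cont G u2 x]]].
Definition touch_of (l x : V) :=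
  [exists v1, [exists u2,
    [&& same_thread l v1, tch G v1 x, ~~ same_thread v1 x & cont G u2 x]]].

Definition future_parallel : Prop :=
      (forall u w, edge u w -> ~~ connect edge w u) /\
      (forall u w, cont G u w + fut G u w + tch G u w <= 1) /\
      (indeg (root G) = 0 /\ forall w, w != root G -> indeg w \in [:: 1; 2]) /\
      (outdeg (final G) = 0 /\ forall u, u != final G -> outdeg u \in [:: 1; 2]) /\
      (forall u, #|[pred w | cont G u w]| <= 1 /\ #|[pred w | cont G w u]| <= 1) /\
      (same_thread (root G) (final G) /\ ~~ has_cont_succ (final G)) /\
      (forall w, w != root G -> ~~ has_cont_pred w -> exists v, fut G v w) /\
      (* forks: left child (future edge) and right child (continuation),
         both of in-degree 1 and not touches *)
      (forall v l, fut G v l ->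
         indeg l = 1 /\ ~~ is_touch l /\
         exists r, [/\ cont G v r, indeg r = 1 & ~~ is_touch r]) /\
      ((forall u, ~~ has_cont_succ u -> ~~ same_thread (root G) u ->
          outdeg u = 1 /\ exists w, tch G u w && ~~ same_thread u w) /\
       (forall v1 v2, tch G v1 v2 ->
          [&& ~~ has_cont_succ v1, ~~ same_thread v1 v2 & has_cont_pred v2])).

(* Structured single-touch computation. For a fork v with left child l
   (first node of the future thread t) and right child r. *)
Definition structured_single_touch : Prop :=
  forall v l r, fut G v l -> cont G v r ->
  [/\
      (forall x u2, touch_of l x -> cont G u2 x -> descendant v u2),
      (exists x, touch_of l x && descendant r x) &
      (forall x y, touch_of l x -> touch_of l y -> x = y)].

End DAG.

Record state (V : finType) (P : nat) := St {
  asg : 'I_P -> option V;        (* node the processor is about to execute *)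
  dq : 'I_P -> seq V;            (* deque: head = top, last = bottom *)
  log : seq ('I_P * V);          (* executed nodes, in execution order *)
  stolen : seq V }.

Definition executed (V : finType) (P : nat) (s : state V P) : seq V :=
  [seq z.2 | z <- log s].

Definition upd (P : nat) (T : Type) (f : 'I_P -> T) (p : 'I_P) (x : T) :=
  fun q => if q == p then x else f q.

Section Sched.
Variables (V : finType) (G : fpdag V) (P : nat).

Definition ready (ex : seq V) (w : V) := [forall u, edge G u w ==> (u \in ex)].

Inductive step : state V P -> state V P -> Prop :=
| ExecFork s p v l r :
    asg s p = Some v -> ready (executed s) v -> fut G v l -> cont G v r ->
    step s (St (upd (asg s) p (Some l)) (upd (dq s) p (rcons (dq s p) r))
               (rcons (log s) (p, v)) (stolen s))
| ExecNext s p v c :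
    asg s p = Some v -> ready (executed s) v -> ~~ is_fork G v -> edge G v c ->
    ready (rcons (executed s) v) c ->
    step s (St (upd (asg s) p (Some c)) (dq s) (rcons (log s) (p, v)) (stolen s))
| ExecStop s p v :
    asg s p = Some v -> ready (executed s) v -> ~~ is_fork G v ->
    (forall c, edge G v c -> ~~ ready (rcons (executed s) v) c) ->
    step s (St (upd (asg s) p None) (dq s) (rcons (log s) (p, v)) (stolen s))
| Pop s p d w :
    asg s p = None -> dq s p = rcons d w ->
    step s (St (upd (asg s) p (Some w)) (upd (dq s) p d) (log s) (stolen s))
| Steal s p q w d :
    asg s p = None -> dq s p = [::] -> q != p -> dq s q = w :: d ->
    step s (St (upd (asg s) p (Some w)) (upd (dq s) q d) (log s)
               (rcons (stolen s) w)).

Inductive steps : state V P -> state V P -> Prop :=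
| steps_refl s : steps s s
| steps_cons s s' s'' : step s s' -> steps s' s'' -> steps s s''.

Definition init (p0 : 'I_P) : state V P :=
  St (fun q => if q == p0 then Some (root G) else None) (fun _ => [::]) [::] [::].

Definition complete_run (s : state V P) : Prop :=
  exists p0, steps (init p0) s /\ forall w, w \in executed s.

End Sched.

Definition imm_before (V : eqType) (o : seq V) (v1 v2 : V) :=
  exists a b, o = a ++ v1 :: v2 :: b.

Definition deviation (V : finType) (P : nat) (o : seq V) (s : state V P) (v2 : V) :=
  exists v1, imm_before o v1 v2 /\
  exists a b (p : 'I_P), log s = a ++ (p, v2) :: b /\
    forall c, [seq z.2 | z <- a & z.1 == p] <> rcons c v1.

(* Main.v *)
Require Import Defs.
From HB Require Import structures.
From mathcomp Require Import all_boot zify.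
From Stdlib Require Import Classical.
Set Implicit Arguments. Unset Strict Implicit. Unset Printing Implicit Defensive.

Module A.
Set Implicit Arguments. Unset Strict Implicit. Unset Printing Implicit Defensive.

Section Rel.
Variable (T : finType) (e : rel T).

Lemma connect_front a c : connect e a c -> a != c ->
  exists2 d, e a d & connect e d c.
Proof.
move=> /connectP [p Hp ->]; case: p Hp => [|d p] /= Hp; first by rewrite eqxx.
case/andP: Hp => Had Hp _; exists d => //; apply/connectP; by exists p.
Qed.

Lemma connect_back a c : connect e a c -> a != c ->
  exists2 d, connect e a d & e d c.
Proof.
move=> /connectP [p Hp ->]; case/lastP: p Hp => [|p d] /=; first by rewrite eqxx.
rewrite rcons_path last_rcons => /andP [Hp Hd] _; exists (last a p) => //.
by apply/connectP; exists p.
Qed.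

Lemma connect_total a b c : (forall x y z, e x y -> e x z -> y = z) ->
  connect e a b -> connect e a c -> connect e b c || connect e c b.
Proof.
move=> Hf /connectP [p Hp ->]; elim: p a Hp => [|d p IH] a /=.
  by move=> _ ->.
case/andP=> Had Hp Hac.
have [<-|Hne] := eqVneq a c.
  apply/orP; right; apply/connectP; exists (d :: p) => //=; by rewrite Had.
have [d' Had' Hd'c] := connect_front Hac Hne.
rewrite (Hf _ _ _ Had' Had) in Hd'c; exact: IH.
Qed.

Lemma connect_ind_back (Q : T -> Prop) a :
  Q a -> (forall x y, connect e a x -> Q x -> e x y -> Q y) ->
  forall b, connect e a b -> Q b.
Proof.
move=> Qa Hs b /connectP [p Hp ->]; elim/last_ind: p Hp => [|p d IH] //=.
rewrite rcons_path last_rcons => /andP [Hp Hd].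
apply: (Hs (last a p)) => //; last exact: IH.
by apply/connectP; exists p.
Qed.

End Rel.

Lemma card_le1_eq (T : finType) (A : {pred T}) a b :
  #|A| <= 1 -> a \in A -> b \in A -> a = b.
Proof. by move=> /card_le1_eqP H Ha Hb; apply: H. Qed.

Lemma card_le2_eq (T : finType) (A : {pred T}) a b c :
  #|A| <= 2 -> a \in A -> b \in A -> c \in A -> a != b -> c = a \/ c = b.
Proof.
move=> HA Ha Hb Hc Hab.
have [->|Hca] := eqVneq c a; first by left.
have [->|Hcb] := eqVneq c b; first by right.
have Hu : uniq [:: a; b; c] by rewrite /= !inE negb_or Hab eq_sym Hca eq_sym Hcb.
have Hs : {subset [:: a; b; c] <= enum A}.
  by move=> z; rewrite !inE mem_enum => /or3P [] /eqP ->.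
have := uniq_leq_size Hu Hs; rewrite -cardE => H.
by have := leq_trans H HA.
Qed.

Lemma card_ge1 (T : finType) (A : {pred T}) a : a \in A -> 0 < #|A|.
Proof. by move=> Ha; apply/card_gt0P; exists a. Qed.

End A.
Import A.

Module B.
Set Implicit Arguments. Unset Strict Implicit. Unset Printing Implicit Defensive.

Section Graph.
Variables (V : finType) (G : fpdag V).
Hypothesis Hfp : future_parallel G.

Local Notation edge := (edge G).

Lemma fp_acyc a b : edge a b -> connect edge b a -> False.
Proof. by case: Hfp => H _ /H /negP. Qed.

Lemma fp_excl a b : cont G a b + fut G a b + tch G a b <= 1.
Proof. by case: Hfp => _ [H _]. Qed.

Lemma edge_irr a : edge a a -> False.
Proof. by move=> H; apply: (fp_acyc H); exact: connect0. Qed.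

Lemma cont_edge a b : cont G a b -> edge a b.
Proof. by rewrite /Defs.edge => ->. Qed.
Lemma fut_edge a b : fut G a b -> edge a b.
Proof. by rewrite /Defs.edge => ->; rewrite orbT. Qed.
Lemma tch_edge a b : tch G a b -> edge a b.
Proof. by rewrite /Defs.edge => ->; rewrite !orbT. Qed.

Lemma connect_cont_edge a b : connect (cont G) a b -> connect edge a b.
Proof. by apply: connect_sub => x y /cont_edge H; exact: connect1. Qed.

Lemma cont_fut a b : cont G a b -> fut G a b -> False.
Proof. by move=> H1 H2; have := fp_excl a b; rewrite H1 H2. Qed.
Lemma cont_tch a b : cont G a b -> tch G a b -> False.
Proof. by move=> H1 H2; have := fp_excl a b; rewrite H1 H2; case: (fut G a b); case: (cont G a b). Qed.
Lemma fut_tch a b : fut G a b -> tch G a b -> False.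
Proof. by move=> H1 H2; have := fp_excl a b; rewrite H1 H2; case: (fut G a b); case: (cont G a b). Qed.

Lemma cont_func a b c : cont G a b -> cont G a c -> b = c.
Proof.
case: Hfp => _ [_ [_ [_ [H _]]]] Hb Hc; case: (H a) => H1 _.
by apply: (card_le1_eq H1); rewrite inE.
Qed.

Lemma cont_inj a b c : cont G a c -> cont G b c -> a = b.
Proof.
case: Hfp => _ [_ [_ [_ [H _]]]] Hb Hc; case: (H c) => _ H1.
by apply: (card_le1_eq H1); rewrite inE.
Qed.

Lemma indeg_root a : edge a (Defs.root G) -> False.
Proof.
case: Hfp => _ [_ [[H _] _]] Ha.
by have := card_ge1 (A := [pred u | edge u (Defs.root G)]) (a := a); rewrite inE Ha /indeg in H *; rewrite H => /(_ isT).
Qed.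

Lemma outdeg_final a : edge (final G) a -> False.
Proof.
case: Hfp => _ [_ [_ [[H _] _]]] Ha.
by have := card_ge1 (A := [pred w | edge (final G) w]) (a := a); rewrite inE Ha /outdeg in H *; rewrite H => /(_ isT).
Qed.

Lemma indeg_le2 w : indeg G w <= 2.
Proof.
case: Hfp => _ [_ [[H0 H] _]]; have [->|Hw] := eqVneq w (Defs.root G); first by rewrite H0.
by have := H _ Hw; rewrite !inE => /orP [] /eqP ->.
Qed.

Lemma outdeg_le2 w : outdeg G w <= 2.
Proof.
case: Hfp => _ [_ [_ [[H0 H] _]]]; have [->|Hw] := eqVneq w (final G); first by rewrite H0.
by have := H _ Hw; rewrite !inE => /orP [] /eqP ->.
Qed.

Lemma tch_props a b : tch G a b ->
  [&& ~~ has_cont_succ G a, ~~ same_thread G a b & has_cont_pred G b].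
Proof. by case: Hfp => _ [_ [_ [_ [_ [_ [_ [_ [_ H]]]]]]]] /H. Qed.

Lemma fork_props v l : fut G v l ->
  indeg G l = 1 /\ ~~ is_touch G l /\
  exists r, [/\ cont G v r, indeg G r = 1 & ~~ is_touch G r].
Proof. by case: Hfp => _ [_ [_ [_ [_ [_ [_ [H _]]]]]]] /H. Qed.

Lemma start_props w : w != Defs.root G -> ~~ has_cont_pred G w -> exists v, fut G v w.
Proof. by case: Hfp => _ [_ [_ [_ [_ [_ [H _]]]]]] /H. Qed.

Lemma indeg1_eq w a b : indeg G w = 1 -> edge a w -> edge b w -> a = b.
Proof.
move=> H Ha Hb; apply: (card_le1_eq (A := [pred u | edge u w])); rewrite ?inE //.
by rewrite -/(indeg G w) H.
Qed.

Lemma touch_parents f g y e : tch G f y -> cont G g y -> edge e y -> e = f \/ e = g.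
Proof.
move=> Hf Hg He.
have Hfg : f != g by apply/eqP => Efg; subst; exact: (cont_tch Hg Hf).
have := card_le2_eq (A := [pred u | edge u y]) (a := f) (b := g) (c := e) (indeg_le2 y).
rewrite !inE (tch_edge Hf) (cont_edge Hg) He.
by move=> /(_ isT isT isT Hfg).
Qed.

Lemma is_touchP y : is_touch G y <-> exists f g, tch G f y /\ cont G g y.
Proof.
split.
  by case/existsP=> f /existsP [g /and3P [H1 _ H3]]; exists f, g.
case=> f [g [H1 H2]]; apply/existsP; exists f; apply/existsP; exists g.
by case/and3P: (tch_props H1) => _ -> _; rewrite H1 H2.
Qed.

Lemma fork_children v l l' : fut G v l -> fut G v l' -> l = l'.
Proof.
move=> Hl Hl'; have [_ [_ [r [Hr _ _]]]] := fork_props Hl.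
have Hlr : l != r by apply/eqP => E; subst; exact: (cont_fut Hr Hl).
have := card_le2_eq (A := [pred w | edge v w]) (a := l) (b := r) (c := l') (outdeg_le2 v).
rewrite !inE (fut_edge Hl) (fut_edge Hl') (cont_edge Hr) => /(_ isT isT isT Hlr) [] // E.
by subst; case: (cont_fut Hr Hl').
Qed.

Lemma right_parent v l r e : fut G v l -> cont G v r -> edge e r -> e = v.
Proof.
move=> Hl Hr He; have [_ [_ [r' [Hr' Hi _]]]] := fork_props Hl.
rewrite -(cont_func Hr Hr') in Hi.
exact: (indeg1_eq Hi He (cont_edge Hr)).
Qed.

Lemma left_parent v l e : fut G v l -> edge e l -> e = v.
Proof.
move=> Hl He; have [Hi _] := fork_props Hl.
exact: (indeg1_eq Hi He (fut_edge Hl)).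
Qed.

Lemma left_no_cont_pred v l a : fut G v l -> cont G a l -> False.
Proof.
move=> Hl Ha; have E := left_parent Hl (cont_edge Ha); subst.
exact: (cont_fut Ha Hl).
Qed.

Lemma right_not_touch v l r : fut G v l -> cont G v r -> ~~ is_touch G r.
Proof.
move=> Hl Hr; have [_ [_ [r' [Hr' _ H]]]] := fork_props Hl.
by rewrite (cont_func Hr Hr').
Qed.

Lemma is_forkP v : is_fork G v <-> exists l, fut G v l.
Proof. by split; [case/existsP => l; exists l | case=> l H; apply/existsP; exists l]. Qed.

Lemma cont_child_parents n c e : cont G n c -> edge e c ->
  e = n \/ tch G e c.
Proof.
move=> Hc; rewrite /Defs.edge => /or3P [He|He|He].
- by left; exact: (cont_inj He Hc).
- by left; have := left_parent He (cont_edge Hc) => ->.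
- by right.
Qed.

Lemma nonfork_out n c c' : ~~ is_fork G n -> cont G n c -> edge n c' -> c' = c.
Proof.
move=> Hnf Hc; rewrite /Defs.edge => /or3P [H|H|H].
- exact: (cont_func H Hc).
- by case/negP: Hnf; apply/is_forkP; exists c'.
- case/and3P: (tch_props H) => /negP H1 _ _; case: H1; apply/existsP; by exists c.
Qed.

Lemma last_out n c' : ~~ is_fork G n -> ~~ has_cont_succ G n -> edge n c' -> tch G n c'.
Proof.
move=> Hnf Hs; rewrite /Defs.edge => /or3P [H|H|H] //.
- by case/negP: Hs; apply/existsP; exists c'.
- by case/negP: Hnf; apply/is_forkP; exists c'.
Qed.

Lemma fork_has_succ v l : fut G v l -> has_cont_succ G v.
Proof. by move=> Hl; have [_ [_ [r [Hr _ _]]]] := fork_props Hl; apply/existsP; exists r. Qed.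

Lemma cont_acyc a b : connect (cont G) a b -> connect (cont G) b a -> a = b.
Proof.
move=> Hab Hba; apply/eqP; apply: contraT => Hne.
have [d Had Hdb] := connect_front Hab Hne.
by case: (fp_acyc (cont_edge Had) (connect_cont_edge (connect_trans Hdb Hba))).
Qed.

Lemma cont_total a b c : connect (cont G) a b -> connect (cont G) a c ->
  connect (cont G) b c || connect (cont G) c b.
Proof. apply: connect_total; exact: cont_func. Qed.

Lemma last_unique a n w : connect (cont G) a n -> connect (cont G) a w ->
  ~~ has_cont_succ G n -> ~~ has_cont_succ G w -> n = w.
Proof.
move=> Hn Hw Hsn Hsw.
have: connect (cont G) n w || connect (cont G) w n by exact: cont_total Hn Hw.
case/orP=> H; apply/eqP; apply: contraT => Hne.
- have [d Hd _] := connect_front H Hne; case/negP: Hsn; apply/existsP; by exists d.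
- rewrite eq_sym in Hne; have [d Hd _] := connect_front H Hne.
  case/negP: Hsw; apply/existsP; by exists d.
Qed.

Lemma no_pred_connect a b : ~~ has_cont_pred G a -> connect (cont G) b a -> b = a.
Proof.
move=> Ha H; apply/eqP; apply: contraT => Hne.
have [d _ Hd] := connect_back H Hne; case/negP: Ha; apply/existsP; by exists d.
Qed.

Lemma root_no_cont_pred : ~~ has_cont_pred G (Defs.root G).
Proof. apply/existsP => [[a /cont_edge /indeg_root]] //. Qed.

Lemma left_no_pred v l : fut G v l -> ~~ has_cont_pred G l.
Proof. by move=> Hl; apply/existsP => [[a /(left_no_cont_pred Hl)]]. Qed.

Lemma same_thread_start a b : ~~ has_cont_pred G a ->
  same_thread G a b -> connect (cont G) a b.
Proof.
move=> Ha /orP [] // H; by rewrite (no_pred_connect Ha H) connect0.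
Qed.

Lemma main_last f : connect (cont G) (Defs.root G) f -> ~~ has_cont_succ G f -> f = final G.
Proof.
case: Hfp => _ [_ [_ [_ [_ [[Hm Hs] _]]]]] Hf Hfs.
apply: (last_unique Hf) => //; exact: same_thread_start root_no_cont_pred Hm.
Qed.

Lemma edge_connect_edge a b : edge a b -> connect edge a b.
Proof. exact: connect1. Qed.

End Graph.

End B.
Import B.

Module C.
Set Implicit Arguments. Unset Strict Implicit. Unset Printing Implicit Defensive.

Lemma count_mem_rcons (T : eqType) (s : seq T) a z :
  count_mem z (rcons s a) = count_mem z s + (a == z).
Proof. by rewrite -cats1 count_cat /= addn0. Qed.

Lemma index_rcons_in (T : eqType) (s : seq T) a z :
  z \in s -> index z (rcons s a) = index z s.
Proof. by move=> Hz; rewrite -cats1 index_cat Hz. Qed.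

Lemma index_rcons_last (T : eqType) (s : seq T) a :
  a \notin s -> index a (rcons s a) = size s.
Proof. by move=> Ha; rewrite -cats1 index_cat (negbTE Ha) /= eqxx addn0. Qed.

Lemma rcons_decomp (T : Type) (L a b : seq T) z y :
  rcons L z = a ++ y :: b ->
  (b = [::] /\ a = L /\ y = z) \/ (exists b', b = rcons b' z /\ L = a ++ y :: b').
Proof.
case/lastP: b => [|b' w].
  by rewrite cats1 => /rcons_inj [-> ->]; left.
rewrite -rcons_cons -rcons_cat => /rcons_inj [-> ->]; right; by exists b'.
Qed.

Section Sum.
Variable P : nat.
Lemma sum_upd1 (F F' : 'I_P -> nat) p : (forall q, q != p -> F' q = F q) ->
  \sum_(q < P) F' q + F p = \sum_(q < P) F q + F' p.
Proof.
move=> H; rewrite (bigD1 p) // [in RHS](bigD1 p) //=.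
rewrite (eq_bigr F) => [|q Hq]; [lia | exact: H].
Qed.

Lemma sum_ge1 (F : 'I_P -> nat) p : F p <= \sum_(q < P) F q.
Proof. by rewrite (bigD1 p) //= leq_addr. Qed.

Lemma sum_ge2 (F : 'I_P -> nat) p q : p != q -> F p + F q <= \sum_(r < P) F r.
Proof.
move=> Hpq; rewrite (bigD1 p) //= leq_add2l (bigD1 q) /=; last by rewrite eq_sym.
exact: leq_addr.
Qed.
End Sum.

Section Runs.
Variables (V : finType) (G : fpdag V) (P : nat).
Hypothesis Hfp : future_parallel G.
Local Notation edge := (edge G).
Local Notation root := (Defs.root G).
Local Notation state := (state V P).

Definition hist (L : seq ('I_P * V)) (p : 'I_P) := [seq z.2 | z <- L & z.1 == p].

Definition Tq (s : state) q z := (asg s q == Some z) + count_mem z (dq s q).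
Definition cnt (s : state) z := count_mem z (executed s) + \sum_(q < P) Tq s q z.

Definition rightc (z : V) := exists f, cont G f z /\ is_fork G f.

Definition Inv (s : state) :=
 (forall z, cnt s z <= 1) /\
     (forall p z a, (asg s p = Some z \/ z \in dq s p) -> edge a z -> a \in executed s) /\
     (forall a b, edge a b -> b \in executed s -> index a (executed s) < index b (executed s)) /\
     (forall p z, z \in dq s p -> rightc z) /\
     (forall p c, asg s p = Some c -> c = root \/ rightc c \/
        exists cc e, [/\ hist (log s) p = rcons cc e, edge e c &
          forall e', edge e' c -> e' \in executed s /\ index e' (executed s) <= index e (executed s)]) /\
     (forall a b p y, log s = a ++ (p,y)::b -> y = root \/ rightc y \/
        exists cc e, [/\ hist a p = rcons cc e, edge e y &
          forall e', edge e' y -> e' \in map snd a /\ index e' (map snd a) <= index e (map snd a)]).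

Section Derived.
Variable s : state.
Hypothesis Hs : Inv s.

Lemma cnt_le z : cnt s z <= 1. Proof. by case: Hs => H _. Qed.

Lemma Tq_asg p z : asg s p = Some z -> 0 < Tq s p z.
Proof. by move=> H; rewrite /Tq H eqxx. Qed.
Lemma Tq_dq p z : z \in dq s p -> 0 < Tq s p z.
Proof. move=> H; rewrite /Tq; have : 0 < count_mem z (dq s p) by rewrite -has_count has_pred1. lia. Qed.
Lemma ex_cnt z : z \in executed s -> 0 < count_mem z (executed s).
Proof. by rewrite -has_count has_pred1. Qed.
Lemma Tq_le1 p z : count_mem z (executed s) + Tq s p z <= 1.
Proof.
have H : Tq s p z <= \sum_(q < P) Tq s q z := sum_ge1 _ p.
have := cnt_le z; rewrite /cnt; lia.
Qed.
Lemma Tq_le2 p q z : p != q -> Tq s p z + Tq s q z <= 1.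
Proof.
move=> Hpq; have H : Tq s p z + Tq s q z <= \sum_(r < P) Tq s r z := sum_ge2 _ Hpq.
have := cnt_le z; rewrite /cnt; lia.
Qed.

Lemma asg_not_ex p z : asg s p = Some z -> z \notin executed s.
Proof.
move=> Ha; apply/negP => Hz; have := Tq_le1 p z; have := Tq_asg Ha; have := ex_cnt Hz; lia.
Qed.

Lemma dq_not_ex p z : z \in dq s p -> z \notin executed s.
Proof.
move=> Ha; apply/negP => Hz; have := Tq_le1 p z; have := Tq_dq Ha; have := ex_cnt Hz; lia.
Qed.

Lemma asg_asg p q z : asg s p = Some z -> asg s q = Some z -> p = q.
Proof.
move=> Hp Hq; apply/eqP; apply: contraT => Hpq.
have := Tq_le2 z Hpq; have := Tq_asg Hp; have := Tq_asg Hq; lia.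
Qed.

Lemma asg_dq p q z : asg s p = Some z -> z \in dq s q -> False.
Proof.
move=> Hp Hq; have [E|Hpq] := eqVneq p q.
  subst; have : 0 < count_mem z (dq s q) by rewrite -has_count has_pred1.
  have := Tq_le1 q z; rewrite /Tq Hp eqxx /=; lia.
have := Tq_le2 z Hpq; have := Tq_asg Hp; have := Tq_dq Hq; lia.
Qed.

Lemma ex_uniq : uniq (executed s).
Proof.
apply: count_mem_uniq => z; have := cnt_le z; rewrite /cnt.
case: (boolP (z \in executed s)) => Hz.
  have := ex_cnt Hz; lia.
by move=> _; apply/eqP; rewrite -leqn0 leqNgt -has_count has_pred1.
Qed.

Lemma pool_parents p z a : asg s p = Some z \/ z \in dq s p -> edge a z -> a \in executed s.
Proof. by case: Hs => _ [H _]; exact: H. Qed.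

Lemma ord_ex a b : edge a b -> b \in executed s -> index a (executed s) < index b (executed s).
Proof. by case: Hs => _ [_ [H _]]; exact: H. Qed.

Lemma closed_ex a b : edge a b -> b \in executed s -> a \in executed s.
Proof.
move=> Hab Hb; have := ord_ex Hab Hb; rewrite -index_mem in Hb.
by move=> H; rewrite -index_mem; exact: ltn_trans H Hb.
Qed.

Lemma closed_ex_connect a b : connect edge a b -> b \in executed s -> a \in executed s.
Proof.
move: b; apply: (connect_ind_back (e := edge) (Q := fun b => b \in executed s -> a \in executed s)) => //.
move=> x y _ IH Hxy Hy; exact: IH (closed_ex Hxy Hy).
Qed.

Lemma ord_connect a b : connect edge a b -> b \in executed s ->
  index a (executed s) <= index b (executed s).
Proof.
move: b; apply: (connect_ind_back (e := edge) (Q := fun b => b \in executed s -> index a (executed s) <= index b (executed s))) => //.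
move=> x y _ IH Hxy Hy; have H1 := ord_ex Hxy Hy.
have := IH (closed_ex Hxy Hy); lia.
Qed.

Lemma dq_rightc p z : z \in dq s p -> rightc z.
Proof. by case: Hs => _ [_ [_ [H _]]]; exact: H. Qed.

Lemma asg_prov p c : asg s p = Some c -> c = root \/ rightc c \/
        exists cc e, [/\ hist (log s) p = rcons cc e, edge e c &
          forall e', edge e' c -> e' \in executed s /\ index e' (executed s) <= index e (executed s)].
Proof. by case: Hs => _ [_ [_ [_ [H _]]]]; exact: H. Qed.

Lemma log_prov a b p y : log s = a ++ (p,y)::b -> y = root \/ rightc y \/
        exists cc e, [/\ hist a p = rcons cc e, edge e y &
          forall e', edge e' y -> e' \in map snd a /\ index e' (map snd a) <= index e (map snd a)].
Proof. by case: Hs => _ [_ [_ [_ [_ H]]]]; exact: H. Qed.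

End Derived.
End Runs.

End C.
Import C.

Module D.
Set Implicit Arguments. Unset Strict Implicit. Unset Printing Implicit Defensive.

Section Step.
Variables (V : finType) (G : fpdag V) (P : nat).
Hypothesis Hfp : future_parallel G.
Local Notation edge := (edge G).
Local Notation root := (Defs.root G).
Local Notation state := (state V P).
Local Notation Inv := (Inv G).
Local Notation cnt := (cnt (P:=P)).
Local Notation Tq := (Tq (P:=P)).
Local Notation hist := (hist (P:=P)).

Lemma Some_eq (T : eqType) (a b : T) : (Some a == Some b) = (a == b).
Proof. by apply/eqP/eqP => [[]|->]. Qed.

Lemma upd_eq (T : Type) (f : 'I_P -> T) p x : upd f p x p = x.
Proof. by rewrite /upd eqxx. Qed.
Lemma upd_neq (T : Type) (f : 'I_P -> T) p x q : q != p -> upd f p x q = f q.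
Proof. by rewrite /upd => /negbTE ->. Qed.

Lemma executed_rcons (s : state) a dq0 st0 p v :
  executed (St a dq0 (rcons (log s) (p, v)) st0) = rcons (executed s) v.
Proof. by rewrite /executed /= map_rcons. Qed.

Lemma hist_rcons_eq (L : seq ('I_P * V)) p v : hist (rcons L (p, v)) p = rcons (hist L p) v.
Proof. by rewrite /C.hist filter_rcons /= eqxx map_rcons. Qed.
Lemma hist_rcons_neq (L : seq ('I_P * V)) p q v : q != p -> hist (rcons L (p, v)) q = hist L q.
Proof. by move=> H; rewrite /C.hist filter_rcons /= eq_sym (negbTE H). Qed.

Lemma cnt0 (s : state) z : z \notin executed s -> (forall q, asg s q <> Some z) ->
  (forall q, z \notin dq s q) -> cnt s z = 0.
Proof.
move=> Hex Ha Hd; rewrite /C.cnt (count_memPn Hex) add0n.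
apply: big1 => q _; rewrite /C.Tq (count_memPn (Hd q)) addn0.
by case: eqP => // /Ha.
Qed.

Section WithInv.
Variable s : state.
Hypothesis Hs : Inv s.

Lemma fresh_child p v c : asg s p = Some v -> edge v c ->
  c \notin executed s /\ (forall q, asg s q <> Some c) /\ (forall q, c \notin dq s q).
Proof.
move=> Ha He; have Hv := asg_not_ex Hs Ha.
split; [|split].
- by apply/negP => /(closed_ex Hs He); apply/negP.
- by move=> q Hq; have := pool_parents Hs (or_introl Hq) He; apply/negP.
- by move=> q; apply/negP => Hq; have := pool_parents Hs (or_intror Hq) He; apply/negP.
Qed.

Lemma fresh_cnt p v c : asg s p = Some v -> edge v c -> cnt s c = 0.
Proof. by move=> Ha He; case: (fresh_child Ha He) => [H1 [H2 H3]]; exact: cnt0. Qed.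

Lemma exec_ord p v (s' : state) : asg s p = Some v -> ready G (executed s) v ->
  executed s' = rcons (executed s) v ->
  forall a b, edge a b -> b \in executed s' -> index a (executed s') < index b (executed s').
Proof.
move=> Ha Hr -> a b Hab; rewrite mem_rcons inE => /orP [/eqP Eb|Hb].
  subst b; have Ha' : a \in executed s by move/forallP: Hr => /(_ a) /implyP; apply.
  rewrite index_rcons_in // index_rcons_last ?(asg_not_ex Hs Ha) //.
  by rewrite index_mem.
have Ha' := closed_ex Hs Hab Hb.
rewrite !index_rcons_in //; by have := ord_ex Hs Hab Hb.
Qed.

Lemma exec_log p v (s' : state) : asg s p = Some v ->
  log s' = rcons (log s) (p, v) ->
  forall a b p' y, log s' = a ++ (p',y)::b -> y = root \/ rightc G y \/
        exists cc e, [/\ hist a p' = rcons cc e, edge e y &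
          forall e', edge e' y -> e' \in map snd a /\ index e' (map snd a) <= index e (map snd a)].
Proof.
move=> Ha -> a b p' y E0; case: (rcons_decomp E0) => [[_ [Ea Ey]]|[b' [_ E]]].
  case: Ey => -> ->; rewrite Ea.
  case: (asg_prov Hs Ha) => [->|[H|[cc [e [H1 H2 H3]]]]]; [by left|by right; left|].
  by right; right; exists cc, e; split.
by move: (log_prov Hs E).
Qed.

Lemma exec_other p v (s' : state) q c : asg s p = Some v -> q != p ->
  log s' = rcons (log s) (p, v) -> executed s' = rcons (executed s) v ->
  asg s q = Some c -> c = root \/ rightc G c \/
        exists cc e, [/\ hist (log s') q = rcons cc e, edge e c &
          forall e', edge e' c -> e' \in executed s' /\ index e' (executed s') <= index e (executed s')].
Proof.
move=> Ha Hq Hl He Hc; case: (asg_prov Hs Hc) => [->|[H|[cc [e [H1 H2 H3]]]]]; [by left|by right; left|].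
right; right; exists cc, e; split => //; first by rewrite Hl hist_rcons_neq.
move=> e' He'; case: (H3 _ He') => Hin Hle; rewrite He mem_rcons inE Hin orbT; split => //.
have [He1 _] := H3 _ H2.
by rewrite !index_rcons_in.
Qed.

End WithInv.

Lemma Inv_fork (s : state) p v l r : Inv s -> asg s p = Some v -> ready G (executed s) v ->
  fut G v l -> cont G v r ->
  Inv (St (upd (asg s) p (Some l)) (upd (dq s) p (rcons (dq s p) r)) (rcons (log s) (p, v)) (stolen s)).
Proof.
move=> Hs Ha Hr Hl Hc.
set s' := St _ _ _ _.
have Hex : executed s' = rcons (executed s) v by exact: executed_rcons.
have Hv := asg_not_ex Hs Ha.
have Hlr : l != r by apply/eqP => E; subst; exact: (cont_fut Hfp Hc Hl).
have Hcl := fresh_cnt Hs Ha (fut_edge Hl).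
have Hcr := fresh_cnt Hs Ha (cont_edge Hc).
have Hisf : is_fork G v by apply/is_forkP; exists l.
split; [|split; [|split; [|split; [|split]]]].
- move=> z.
  have E : cnt s' z = cnt s z + (l == z) + (r == z).
    have Hoth : forall q, q != p -> Tq s' q z = Tq s q z.
      by move=> q Hq; rewrite /C.Tq /= !upd_neq.
    have Hsum := sum_upd1 Hoth.
    have E1 : Tq s' p z = (l == z) + count_mem z (dq s p) + (r == z).
      by rewrite /C.Tq /= !upd_eq count_mem_rcons Some_eq addnA.
    have E2 : Tq s p z = (v == z) + count_mem z (dq s p) by rewrite /C.Tq Ha Some_eq.
    rewrite /C.cnt Hex count_mem_rcons.
    move: Hsum; rewrite E1 E2; lia.
  rewrite E; have := cnt_le Hs z.
  have [<-|Hzl] := eqVneq l z; first by rewrite Hcl eq_sym (negbTE Hlr).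
  have [<-|Hzr] := eqVneq r z; first by rewrite Hcr.
  lia.
- move=> q z a; rewrite /= Hex mem_rcons inE.
  have [->|Hq] := eqVneq q p.
    rewrite !upd_eq mem_rcons inE => -[[<-]|/orP [/eqP ->|Hz]] He.
    + by rewrite (left_parent Hfp Hl He) eqxx.
    + by rewrite (right_parent Hfp Hl Hc He) eqxx.
    + by rewrite (pool_parents Hs (or_intror Hz) He) orbT.
  rewrite !upd_neq // => Hz He; by rewrite (pool_parents Hs Hz He) orbT.
- exact: (exec_ord Hs Ha Hr Hex).
- move=> q z; rewrite /=; have [->|Hq] := eqVneq q p.
    rewrite upd_eq mem_rcons inE => /orP [/eqP ->|Hz]; first by exists v.
    by move: (dq_rightc Hs Hz).
  by rewrite upd_neq // => Hz; move: (dq_rightc Hs Hz).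
- move=> q c; rewrite /=; have [->|Hq] := eqVneq q p.
    rewrite upd_eq => -[<-]; right; right; exists (hist (log s) p), v; split.
    + exact: hist_rcons_eq.
    + exact: fut_edge.
    + move=> e' He'; rewrite (left_parent Hfp Hl He') Hex mem_rcons inE eqxx; split => //.
  rewrite upd_neq // => Hc'; by move: (exec_other (s' := s') Hs Ha Hq (erefl _) Hex Hc').
- by move: (exec_log (s' := s') Hs Ha (erefl _)).
Qed.

Lemma Inv_next (s : state) p v c : Inv s -> asg s p = Some v -> ready G (executed s) v ->
  edge v c -> ready G (rcons (executed s) v) c ->
  Inv (St (upd (asg s) p (Some c)) (dq s) (rcons (log s) (p, v)) (stolen s)).
Proof.
move=> Hs Ha Hr He Hrc.
set s' := St _ _ _ _.
have Hex : executed s' = rcons (executed s) v by exact: executed_rcons.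
have Hv := asg_not_ex Hs Ha.
have Hcc := fresh_cnt Hs Ha He.
have Hrc' : forall e', edge e' c -> e' \in rcons (executed s) v.
  by move=> e' He'; move/forallP: Hrc => /(_ e') /implyP; apply.
split; [|split; [|split; [|split; [|split]]]].
- move=> z.
  have Hoth : forall q, q != p -> Tq s' q z = Tq s q z.
    by move=> q Hq; rewrite /C.Tq /= !upd_neq.
  have Hsum := sum_upd1 Hoth.
  have E1 : Tq s' p z = (c == z) + count_mem z (dq s p).
    by rewrite /C.Tq /= !upd_eq Some_eq.
  have E2 : Tq s p z = (v == z) + count_mem z (dq s p) by rewrite /C.Tq Ha Some_eq.
  have E : cnt s' z = cnt s z + (c == z).
    rewrite /C.cnt Hex count_mem_rcons.
    move: Hsum; rewrite E1 E2; lia.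
  rewrite E; have := cnt_le Hs z.
  have [<-|Hzc] := eqVneq c z; first by rewrite Hcc.
  lia.
- move=> q z a; rewrite /= Hex.
  have [->|Hq] := eqVneq q p.
    rewrite !upd_eq => -[[<-]|Hz] He'; first exact: Hrc'.
    by rewrite mem_rcons inE (pool_parents Hs (or_intror Hz) He') orbT.
  rewrite !upd_neq // => Hz He'; by rewrite mem_rcons inE (pool_parents Hs Hz He') orbT.
- exact: (exec_ord Hs Ha Hr Hex).
- by move=> q z /= Hz; move: (dq_rightc Hs Hz).
- move=> q c'; rewrite /=; have [->|Hq] := eqVneq q p.
    rewrite upd_eq => -[<-]; right; right; exists (hist (log s) p), v; split.
    + exact: hist_rcons_eq.
    + exact: He.
    + move=> e' He'; have H1 := Hrc' _ He'; rewrite Hex; split => //.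
      rewrite index_rcons_last //.
      have := H1; rewrite -index_mem size_rcons; lia.
  rewrite upd_neq // => Hc'; by move: (exec_other (s' := s') Hs Ha Hq (erefl _) Hex Hc').
- by move: (exec_log (s' := s') Hs Ha (erefl _)).
Qed.

Lemma Inv_stop (s : state) p v : Inv s -> asg s p = Some v -> ready G (executed s) v ->
  Inv (St (upd (asg s) p None) (dq s) (rcons (log s) (p, v)) (stolen s)).
Proof.
move=> Hs Ha Hr.
set s' := St _ _ _ _.
have Hex : executed s' = rcons (executed s) v by exact: executed_rcons.
split; [|split; [|split; [|split; [|split]]]].
- move=> z.
  have Hoth : forall q, q != p -> Tq s' q z = Tq s q z.
    by move=> q Hq; rewrite /C.Tq /= !upd_neq.
  have Hsum := sum_upd1 Hoth.
  have E1 : Tq s' p z = count_mem z (dq s p) by rewrite /C.Tq /= !upd_eq.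
  have E2 : Tq s p z = (v == z) + count_mem z (dq s p) by rewrite /C.Tq Ha Some_eq.
  have := cnt_le Hs z.
  rewrite /C.cnt Hex count_mem_rcons.
  move: Hsum; rewrite E1 E2; lia.
- move=> q z a; rewrite /= Hex.
  have [->|Hq] := eqVneq q p.
    rewrite !upd_eq => -[//|Hz] He'.
    by rewrite mem_rcons inE (pool_parents Hs (or_intror Hz) He') orbT.
  rewrite !upd_neq // => Hz He'; by rewrite mem_rcons inE (pool_parents Hs Hz He') orbT.
- exact: (exec_ord Hs Ha Hr Hex).
- by move=> q z /= Hz; move: (dq_rightc Hs Hz).
- move=> q c'; rewrite /=; have [->|Hq] := eqVneq q p.
    by rewrite upd_eq.
  rewrite upd_neq // => Hc'; by move: (exec_other (s' := s') Hs Ha Hq (erefl _) Hex Hc').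
- by move: (exec_log (s' := s') Hs Ha (erefl _)).
Qed.

Lemma Inv_pop (s : state) p d w : Inv s -> asg s p = None -> dq s p = rcons d w ->
  Inv (St (upd (asg s) p (Some w)) (upd (dq s) p d) (log s) (stolen s)).
Proof.
move=> Hs Ha Hd.
set s' := St _ _ _ _.
have Hex : executed s' = executed s by [].
have Hw : w \in dq s p by rewrite Hd mem_rcons mem_head.
have Hsub : forall z, z \in d -> z \in dq s p by move=> z Hz; rewrite Hd mem_rcons inE Hz orbT.
split; [|split; [|split; [|split; [|split]]]].
- move=> z.
  have Hoth : forall q, q != p -> Tq s' q z = Tq s q z.
    by move=> q Hq; rewrite /C.Tq /= !upd_neq.
  have Hsum := sum_upd1 Hoth.
  have E1 : Tq s' p z = (w == z) + count_mem z d by rewrite /C.Tq /= !upd_eq Some_eq.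
  have E2 : Tq s p z = count_mem z d + (w == z) by rewrite /C.Tq Ha Hd count_mem_rcons.
  have := cnt_le Hs z.
  rewrite /C.cnt Hex.
  move: Hsum; rewrite E1 E2; lia.
- move=> q z a; rewrite /= Hex.
  have [->|Hq] := eqVneq q p.
    rewrite !upd_eq => -[[<-]|Hz] He'.
      by move: (pool_parents Hs (or_intror Hw) He').
    by move: (pool_parents Hs (or_intror (Hsub _ Hz)) He').
  rewrite !upd_neq // => Hz He'; by move: (pool_parents Hs Hz He').
- by move=> a b He' Hb; move: (ord_ex Hs He' Hb).
- move=> q z /=; have [->|Hq] := eqVneq q p.
    by rewrite upd_eq => Hz; move: (dq_rightc Hs (Hsub _ Hz)).
  by rewrite upd_neq // => Hz; move: (dq_rightc Hs Hz).
- move=> q c'; rewrite /=; have [->|Hq] := eqVneq q p.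
    by rewrite upd_eq => -[<-]; right; left; move: (dq_rightc Hs Hw).
  by rewrite upd_neq // => Hc'; move: (asg_prov Hs Hc').
- by move=> a b q y /= E; move: (log_prov Hs E).
Qed.

Lemma Inv_steal (s : state) p q w d : Inv s -> asg s p = None -> dq s p = [::] -> q != p ->
  dq s q = w :: d ->
  Inv (St (upd (asg s) p (Some w)) (upd (dq s) q d) (log s) (rcons (stolen s) w)).
Proof.
move=> Hs Ha Hdp Hqp Hd.
set s' := St _ _ _ _.
have Hex : executed s' = executed s by [].
have Hw : w \in dq s q by rewrite Hd mem_head.
have Hsub : forall z, z \in d -> z \in dq s q by move=> z Hz; rewrite Hd inE Hz orbT.
split; [|split; [|split; [|split; [|split]]]].
- move=> z.
  pose H r := if r == p then Tq s' p z else Tq s r z.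
  have Hoth1 : forall r, r != q -> Tq s' r z = H r.
    move=> r Hr; rewrite /H; case: eqP => [->//|/eqP Hrp].
    by rewrite /C.Tq /= upd_neq // upd_neq.
  have Hoth2 : forall r, r != p -> H r = Tq s r z.
    by move=> r Hr; rewrite /H (negbTE Hr).
  have S1 := sum_upd1 Hoth1.
  have S2 := sum_upd1 Hoth2.
  have E1 : H q = Tq s q z by rewrite /H (negbTE Hqp).
  have E2 : H p = Tq s' p z by rewrite /H eqxx.
  have Hpq : p != q by rewrite eq_sym.
  have E3 : Tq s' p z = (w == z) by rewrite /C.Tq /= upd_eq upd_neq // Hdp Some_eq addn0.
  have E4 : Tq s p z = 0 by rewrite /C.Tq Ha Hdp.
  have E5 : Tq s q z = Tq s' q z + (w == z).
    rewrite /C.Tq /= upd_neq // upd_eq Hd /=; lia.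
  have := cnt_le Hs z.
  rewrite /C.cnt Hex.
  move: S1 S2; rewrite E1 E2 E3 E4 E5; lia.
- move=> r z a; rewrite /= Hex.
  have [->|Hr] := eqVneq r p.
    rewrite upd_eq upd_neq ?(eq_sym p q) // Hdp => -[[<-]|//] He'.
    by move: (pool_parents Hs (or_intror Hw) He').
  rewrite upd_neq //; have [->|Hrq] := eqVneq r q.
    rewrite upd_eq => -[Hz|Hz] He'.
      by move: (pool_parents Hs (or_introl Hz) He').
    by move: (pool_parents Hs (or_intror (Hsub _ Hz)) He').
  rewrite upd_neq // => Hz He'; by move: (pool_parents Hs Hz He').
- by move=> a b He' Hb; move: (ord_ex Hs He' Hb).
- move=> r z /=; have [->|Hrq] := eqVneq r q.
    by rewrite upd_eq => Hz; move: (dq_rightc Hs (Hsub _ Hz)).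
  by rewrite upd_neq // => Hz; move: (dq_rightc Hs Hz).
- move=> r c'; rewrite /=; have [->|Hr] := eqVneq r p.
    by rewrite upd_eq => -[<-]; right; left; move: (dq_rightc Hs Hw).
  by rewrite upd_neq // => Hc'; move: (asg_prov Hs Hc').
- by move=> a b r y /= E; move: (log_prov Hs E).
Qed.

Lemma Inv_step (s s' : state) : Inv s -> step G s s' -> Inv s'.
Proof.
move=> Hs Hst; case: Hst Hs => [s0 p v l r Ha Hr Hl Hc|s0 p v c Ha Hr _ He Hrc|s0 p v Ha Hr _ _|s0 p d w Ha Hd|s0 p q w d Ha Hd Hq Hdq] Hs.
- exact: Inv_fork.
- exact: Inv_next.
- exact: Inv_stop.
- exact: Inv_pop.
- exact: Inv_steal.
Qed.

Lemma Inv_init (p0 : 'I_P) : Inv (init G p0).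
Proof.
split; [|split; [|split; [|split; [|split]]]] => //=.
- move=> z; rewrite /C.cnt /= add0n (bigD1 p0) //= big1 => [|q Hq].
    by rewrite /C.Tq /= eqxx addn0; case: eqP.
  by rewrite /C.Tq /= (negbTE Hq).
- move=> p z a [|//]; case: eqP => // _ [<-] He; case: (indeg_root Hfp He).
- move=> p c; case: eqP => // _ [<-]; by left.
- by move=> [|//] b p y.
Qed.

Lemma Inv_steps (s s' : state) : Inv s -> steps G s s' -> Inv s'.
Proof. by move=> Hs H; elim: H Hs => // {}s s1 s2 Hst _ IH Hs; apply: IH; exact: Inv_step Hst. Qed.

End Step.

End D.
Import D.

Module E.
Set Implicit Arguments. Unset Strict Implicit. Unset Printing Implicit Defensive.

Section RunUtil.
Variables (V : finType) (G : fpdag V) (P : nat).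
Local Notation state := (state V P).

Lemma step_log (s s' : state) : step G s s' ->
  log s' = log s \/ exists p z, asg s p = Some z /\ log s' = rcons (log s) (p, z).
Proof.
case=> {s s'} s p.
- by move=> v l r Ha _ _ _; right; exists p, v.
- by move=> v c Ha _ _ _ _; right; exists p, v.
- by move=> v Ha _ _ _; right; exists p, v.
- by move=> d w _ _; left.
- by move=> q w d _ _ _ _; left.
Qed.

Lemma step_stolen (s s' : state) : step G s s' -> forall z, z \in stolen s -> z \in stolen s'.
Proof.
case=> {s s'} s p //=.
by move=> q w d _ _ _ _ z Hz; rewrite mem_rcons inE Hz orbT.
Qed.

Lemma steps_log (s s' : state) : steps G s s' -> exists ext, log s' = log s ++ ext.
Proof.
elim=> [s0|s0 s1 s2 Hst _ [ext IH]]; first by exists [::]; rewrite cats0.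
case: (step_log Hst) => [E|[p [z [_ E]]]].
  by exists ext; rewrite IH E.
by exists ((p, z) :: ext); rewrite IH E -cats1 -catA.
Qed.

Lemma steps_stolen (s s' : state) : steps G s s' -> forall z, z \in stolen s -> z \in stolen s'.
Proof.
elim=> // s0 s1 s2 Hst _ IH z Hz; apply: IH; exact: step_stolen Hst _ Hz.
Qed.

Lemma steps_trans (s1 s2 s3 : state) : steps G s1 s2 -> steps G s2 s3 -> steps G s1 s3.
Proof. by elim=> // a b c Hab _ IH H; apply: steps_cons Hab (IH H). Qed.

Lemma find_step (s s' : state) v : steps G s s' -> v \in executed s' -> v \notin executed s ->
  exists sa sb, [/\ steps G s sa, step G sa sb, steps G sb s', v \notin executed sa & v \in executed sb].
Proof.
elim=> [s0 -> //|s0 s1 s2 Hst Hs IH Hv Hnv].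
case: (boolP (v \in executed s1)) => Hv1.
  exists s0, s1; split => //; exact: steps_refl.
have [sa [sb [H1 H2 H3 H4 H5]]] := IH Hv Hv1.
exists sa, sb; split => //; exact: steps_cons Hst H1.
Qed.

Lemma steps_reach p0 (s : state) : steps G (init G p0) s -> forall s', steps G s s' -> steps G (init G p0) s'.
Proof. by move=> H s' H'; exact: steps_trans H H'. Qed.

End RunUtil.

Lemma P1_stolen (V : finType) (G : fpdag V) (s s' : Defs.state V 1) :
  steps G s s' -> stolen s = [::] -> stolen s' = [::].
Proof.
elim=> // s0 s1 s2 Hst _ IH H0; apply: IH => //.
case: Hst H0 => //= {s0 s1 s2} s0 p q w d _ _ Hqp _.
by move: Hqp; rewrite [p]ord1 [q]ord1 eqxx.
Qed.

Lemma index_prefix (T : eqType) (ex t : seq T) n e :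
  index e (ex ++ n :: t) < index n (ex ++ n :: t) -> e \in ex.
Proof.
rewrite !index_cat; case: (boolP (e \in ex)) => // _.
case: (boolP (n \in ex)) => Hn.
  have := index_mem n ex; rewrite Hn; lia.
rewrite /= eqxx; lia.
Qed.

Lemma decomp_unique (I T : eqType) (L a b a' b' : seq (I * T)) p p' y :
  uniq (map snd L) -> L = a ++ (p, y) :: b -> L = a' ++ (p', y) :: b' -> a = a' /\ p = p'.
Proof.
move=> Hu E1 E2.
have Hs : forall a0 b0 p0, L = a0 ++ (p0, y) :: b0 -> size a0 = index y (map snd L).
  move=> a0 b0 p0 E; move: Hu; rewrite E map_cat cat_uniq /= => /and3P [_ H _].
  rewrite index_cat; case: ifP => [Hin|_]; first by move: H; rewrite Hin.
  by rewrite /= eqxx addn0 size_map.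
have Ea : size a = size a' by rewrite (Hs _ _ _ E1) (Hs _ _ _ E2).
have E := E1; rewrite E2 in E.
have := congr1 (take (size a)) E; rewrite take_size_cat // Ea take_size_cat // => Eaa.
subst a'; move: E => /eqP; rewrite eqseq_cat // => /andP [_ /eqP [->]]; by split.
Qed.

Lemma decomp_exists (I T : eqType) (L : seq (I * T)) y :
  y \in map snd L -> exists a b p, L = a ++ (p, y) :: b.
Proof.
case/mapP=> [[p y'] Hin /= ->]; case/splitPr: Hin => a b; by exists a, b, p.
Qed.

End E.
Import E.

Module F.
Set Implicit Arguments. Unset Strict Implicit. Unset Printing Implicit Defensive.

Section LemmaG.
Variables (V : finType) (G : fpdag V) (P : nat).
Hypothesis Hfp : future_parallel G.
Local Notation edge := (edge G).
Local Notation state := (state V P).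
Local Notation Inv := (Inv G).
Local Notation hist := (hist (P:=P)).

Variables (v l u x w : V).
Hypotheses (Hl : fut G v l) (Hu : cont G v u) (Hw : connect (cont G) l w)
  (Hws : ~~ has_cont_succ G w) (Hwx : tch G w x) (Hsingle : forall c, tch G w c -> c = x)
  (Hux : connect edge u x) (Hxu : x != u).
Variable (sf : state).
Hypotheses (HIsf : Inv sf)
  (Hns : forall y f g, connect (cont G) l y -> tch G f y -> cont G g y ->
         index f (executed sf) < index g (executed sf))
  (Hst : u \notin stolen sf).
Section P0.
Variable p0 : 'I_P.

Definition tn n := connect (cont G) l n.
Definition unex (s : state) b := forall m, tn m -> connect (cont G) b m -> m \notin executed s.

Definition Ph (s : state) :=
  (exists n A, [/\ asg s p0 = Some n, tn n, dq s p0 = rcons A u & unex s n]) \/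
  (exists b A B, [/\ dq s p0 = A ++ u :: b :: B, tn b & unex s b]) \/
  (exists A cc, [/\ asg s p0 = None, dq s p0 = rcons A u & hist (log s) p0 = rcons cc w]) \/
  (exists cc, asg s p0 = Some u /\ hist (log s) p0 = rcons cc w) \/
  (exists a b cc, log s = a ++ (p0,u)::b /\ hist a p0 = rcons cc w).

Lemma unex_frame (s : state) b q z : Inv s -> tn b -> unex s b -> asg s q = Some z -> z != b ->
  forall m, tn m -> connect (cont G) b m -> m \notin rcons (executed s) z.
Proof.
move=> Hs Hb Hun Hq Hzb m Hm Hbm; rewrite mem_rcons inE negb_or (Hun _ Hm Hbm) andbT.
apply/eqP => Emz; subst m.
have Hbz : b != z by rewrite eq_sym.
have [m' Hbm' Hm'z] := connect_back Hbm Hbz.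
have Hm'ex := pool_parents Hs (or_introl Hq) (cont_edge Hm'z).
have Htm' : tn m' by exact: connect_trans Hb Hbm'.
by move: (Hun _ Htm' Hbm'); rewrite Hm'ex.
Qed.

Lemma unex_next (s : state) n c : Inv s -> unex s n -> cont G n c ->
  forall m, tn m -> connect (cont G) c m -> m \notin rcons (executed s) n.
Proof.
move=> Hs Hun Hnc m Hm Hcm; rewrite mem_rcons inE negb_or.
have Hnm : connect (cont G) n m by exact: connect_trans (connect1 Hnc) Hcm.
rewrite (Hun _ Hm Hnm) andbT; apply/eqP => E; subst m.
exact: (fp_acyc Hfp (cont_edge Hnc) (connect_cont_edge Hcm)).
Qed.

Lemma steal_p0 (s s' : state) A rest w' d :
  (forall z, z \in stolen s' -> z \in stolen sf) -> w' \in stolen s' ->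
  dq s p0 = A ++ u :: rest -> dq s p0 = w' :: d -> exists A', A = w' :: A' /\ d = A' ++ u :: rest.
Proof.
move=> Hsub Hw' -> ; case: A => [|a A] /= [E1 E2].
  by subst; move: (Hsub _ Hw'); rewrite (negbTE Hst).
by subst; exists A.
Qed.

Lemma ready_next (s : state) n c0 ext : Inv s -> asg s p0 = Some n -> tn n -> cont G n c0 ->
  executed sf = rcons (executed s) n ++ ext -> ready G (rcons (executed s) n) c0.
Proof.
move=> Hs Ha Hn Hc Hex; apply/forallP => e; apply/implyP => He.
case: (cont_child_parents Hfp Hc He) => [->|Ht]; first by rewrite -cats1 mem_cat inE eqxx orbT.
have := Hns (connect_trans Hn (connect1 Hc)) Ht Hc.
rewrite Hex -cats1 -catA /= => /index_prefix Hin; by rewrite mem_cat Hin.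
Qed.

Lemma w_not_ready (s : state) c : Inv s -> asg s p0 = Some w -> u \in dq s p0 ->
  tch G w c -> ~~ ready G (rcons (executed s) w) c.
Proof.
move=> Hs Ha Hud Hc; rewrite (Hsingle Hc); apply/negP => Hr.
have Huex : u \notin executed s := dq_not_ex Hs Hud.
have Hux' : u != x by rewrite eq_sym.
have [q Huq Hqx] := connect_back Hux Hux'.
have : q \in rcons (executed s) w by move/forallP: Hr => /(_ q) /implyP; apply.
rewrite mem_rcons inE => /orP [/eqP Eq|Hq].
  subst q; have Huw : u != w by apply/eqP => E; subst; case: (asg_dq Hs Ha Hud).
  have [q' Huq' Hq'w] := connect_back Huq Huw.
  have Hq'ex := pool_parents Hs (or_introl Ha) Hq'w.
  by move: Huex; rewrite (closed_ex_connect Hs Huq' Hq'ex).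
by move: Huex; rewrite (closed_ex_connect Hs Huq Hq).
Qed.

Lemma Ph_frame (s s' : state) : Inv s -> Ph s ->
  asg s' p0 = asg s p0 ->
  (dq s' p0 = dq s p0 \/ exists w' d, [/\ dq s p0 = w' :: d, dq s' p0 = d & w' \in stolen s']) ->
  (forall z, z \in stolen s' -> z \in stolen sf) ->
  (log s' = log s \/ exists q z, [/\ q != p0, asg s q = Some z & log s' = rcons (log s) (q, z)]) ->
  Ph s'.
Proof.
move=> Hs Hph Ha Hd Hsub Hlog.
have Hunex : forall b, tn b -> unex s b -> (forall q z, q != p0 -> asg s q = Some z -> z != b) -> unex s' b.
  move=> b Hb Hun Hneq; case: Hlog => [E|[q [z [Hq Hz E]]]] m Hm Hbm.
    by rewrite /executed E; apply: Hun.
  rewrite /executed E map_rcons; exact: unex_frame Hs Hb Hun Hz (Hneq _ _ Hq Hz) _ Hm Hbm.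
have Hhist : hist (log s') p0 = hist (log s) p0.
  by case: Hlog => [->|[q [z [Hq _ ->]]]] //; rewrite hist_rcons_neq // eq_sym.
have Hdq : forall A rest, dq s p0 = A ++ u :: rest -> exists A', dq s' p0 = A' ++ u :: rest.
  move=> A rest E; case: Hd => [->|[w' [d [E1 E2 E3]]]]; first by exists A.
  have [A' [_ Ed]] := steal_p0 Hsub E3 E E1; by exists A'; rewrite E2 Ed.
case: Hph => [[n [A [Ha0 Hn HdA Hun]]]|[[b [A [B [HdA Hb Hun]]]]|[[A [cc [Ha0 HdA Hh]]]|[[cc [Ha0 Hh]]|[a [b [cc [E Hh]]]]]]]].
- left; have [A' HA'] := Hdq A [::] (ltac:(by rewrite HdA cats1)).
  exists n, A'; split => //; first by rewrite Ha.
  + by rewrite HA' cats1.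
  + apply: Hunex => // q z Hq Hz; apply/eqP => E; subst z.
    by move/eqP: Hq; apply; move: (asg_asg Hs Hz Ha0).
- right; left; have [A' HA'] := Hdq A (b :: B) HdA.
  exists b, A', B; split => //.
  apply: Hunex => // q z Hq Hz; apply/eqP => E; subst z.
  by apply: (asg_dq Hs Hz (q := p0)); rewrite HdA mem_cat inE inE eqxx orbT orbT.
- right; right; left; have [A' HA'] := Hdq A [::] (ltac:(by rewrite HdA cats1)).
  by exists A', cc; split; [rewrite Ha | rewrite HA' cats1 | rewrite Hhist].
- by right; right; right; left; exists cc; rewrite Ha Hhist.
- right; right; right; right; case: Hlog => [E'|[q [z [_ _ E']]]].
    by exists a, b, cc; rewrite E' E.
  by exists a, (rcons b (q, z)), cc; rewrite E' E rcons_cat.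
Qed.

Lemma Ph_late (s s' : state) z :
  asg s p0 = Some z -> log s' = rcons (log s) (p0, z) ->
  (exists cc, asg s p0 = Some u /\ hist (log s) p0 = rcons cc w) \/
  (exists a b cc, log s = a ++ (p0,u)::b /\ hist a p0 = rcons cc w) -> Ph s'.
Proof.
move=> Ha E [[cc [Hu0 Hh]]|[a [b [cc [E1 Hh]]]]]; right; right; right; right.
  rewrite Ha in Hu0; case: Hu0 => Ez; subst z; exists (log s), [::], cc; by rewrite E cats1.
by exists a, (rcons b (p0, z)), cc; rewrite E E1 rcons_cat.
Qed.

Lemma Ph_step (s s' : state) : Inv s -> step G s s' -> steps G s' sf -> Ph s -> Ph s'.
Proof.
move=> Hs Hstep Hsf Hph.
have [ext Hext] := steps_log Hsf.
have Hstol := steps_stolen Hsf.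
case: Hstep Hs Hph Hext Hstol => [s0 p z l' r Ha Hr Hl' Hc | s0 p z c Ha Hr Hnf He Hrc | s0 p z Ha Hr Hnf Hno | s0 p d w' Ha Hd | s0 p q w' d Ha Hd Hqp Hdq] Hs Hph Hext Hstol.
- have [Ep|Hp] := eqVneq p p0; last first.
    apply: Ph_frame Hs Hph _ _ Hstol _ => /=.
    + by rewrite upd_neq // eq_sym.
    + by left; rewrite upd_neq // eq_sym.
    + by right; exists p, z; split => //; rewrite eq_sym.
  subst p.
  case: Hph => [[n [A [Ha0 Hn HdA Hun]]]|[[b [A [B [HdA Hb Hun]]]]|[[A [cc [Ha0 HdA Hh]]]|Hlate]]].
  + rewrite Ha0 in Ha; case: Ha => Ezn; subst z.
    right; left; exists r, A, [::]; split => /=.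
    * by rewrite upd_eq HdA -!cats1 -catA.
    * exact: connect_trans Hn (connect1 Hc).
    * move=> m Hm Hrm; rewrite executed_rcons; by move: (unex_next Hs Hun Hc Hm Hrm).
  + right; left; exists b, A, (rcons B r); split => //=.
    * by rewrite upd_eq HdA rcons_cat.
    * have Hzb : z != b.
        apply/eqP => E; subst z; apply: (asg_dq Hs Ha (q := p0)).
        by rewrite HdA mem_cat inE inE eqxx orbT orbT.
      move=> m Hm Hbm; rewrite executed_rcons; by move: (unex_frame Hs Hb Hun Ha Hzb Hm Hbm).
  + by rewrite Ha0 in Ha.
  + by apply: (Ph_late Ha _ Hlate).
- have [Ep|Hp] := eqVneq p p0; last first.
    apply: Ph_frame Hs Hph _ _ Hstol _ => /=.
    + by rewrite upd_neq // eq_sym.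
    + by left.
    + by right; exists p, z; split => //; rewrite eq_sym.
  subst p.
  case: Hph => [[n [A [Ha0 Hn HdA Hun]]]|[[b [A [B [HdA Hb Hun]]]]|[[A [cc [Ha0 HdA Hh]]]|Hlate]]].
  + rewrite Ha0 in Ha; case: Ha => Ezn; subst z.
    case: (boolP (has_cont_succ G n)) => [/existsP [c0 Hc0]|Hns'].
      have Ecc := nonfork_out Hfp Hnf Hc0 He; subst c0.
      left; exists c, A; split => //=.
      * by rewrite upd_eq.
      * exact: connect_trans Hn (connect1 Hc0).
      * move=> m Hm Hcm; rewrite executed_rcons; by move: (unex_next Hs Hun Hc0 Hm Hcm).
    have Enw := last_unique Hfp Hn Hw Hns' Hws; subst n.
    have Hud : u \in dq s0 p0 by rewrite HdA mem_rcons mem_head.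
    by move: (w_not_ready Hs Ha0 Hud (last_out Hnf Hws He)); rewrite Hrc.
  + right; left; exists b, A, B; split => //=.
    have Hzb : z != b.
      apply/eqP => E; subst z; apply: (asg_dq Hs Ha (q := p0)).
      by rewrite HdA mem_cat inE inE eqxx orbT orbT.
    move=> m Hm Hbm; rewrite executed_rcons; by move: (unex_frame Hs Hb Hun Ha Hzb Hm Hbm).
  + by rewrite Ha0 in Ha.
  + by apply: (Ph_late Ha _ Hlate).
- have [Ep|Hp] := eqVneq p p0; last first.
    apply: Ph_frame Hs Hph _ _ Hstol _ => /=.
    + by rewrite upd_neq // eq_sym.
    + by left.
    + by right; exists p, z; split => //; rewrite eq_sym.
  subst p.
  case: Hph => [[n [A [Ha0 Hn HdA Hun]]]|[[b [A [B [HdA Hb Hun]]]]|[[A [cc [Ha0 HdA Hh]]]|Hlate]]].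
  + rewrite Ha0 in Ha; case: Ha => Ezn; subst z.
    case: (boolP (has_cont_succ G n)) => [/existsP [c0 Hc0]|Hns'].
      have Hexf : executed sf = rcons (executed s0) n ++ map snd ext.
        by rewrite /executed Hext /= map_cat map_rcons.
      have := ready_next Hs Ha0 Hn Hc0 Hexf.
      by move: (Hno _ (cont_edge Hc0)) => /negbTE ->.
    have Enw := last_unique Hfp Hn Hw Hns' Hws; subst n.
    right; right; left; exists A, (hist (log s0) p0); split => //=.
    * by rewrite upd_eq.
    * exact: hist_rcons_eq.
  + right; left; exists b, A, B; split => //=.
    have Hzb : z != b.
      apply/eqP => E; subst z; apply: (asg_dq Hs Ha (q := p0)).
      by rewrite HdA mem_cat inE inE eqxx orbT orbT.
    move=> m Hm Hbm; rewrite executed_rcons; by move: (unex_frame Hs Hb Hun Ha Hzb Hm Hbm).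
  + by rewrite Ha0 in Ha.
  + by apply: (Ph_late Ha _ Hlate).
- have [Ep|Hp] := eqVneq p p0; last first.
    apply: Ph_frame Hs Hph _ _ Hstol _ => /=.
    + by rewrite upd_neq // eq_sym.
    + by left; rewrite upd_neq // eq_sym.
    + by left.
  subst p.
  case: Hph => [[n [A [Ha0 Hn HdA Hun]]]|[[b [A [B [HdA Hb Hun]]]]|[[A [cc [Ha0 HdA Hh]]]|[[cc [Ha0 Hh]]|Hlog]]]].
  + by rewrite Ha0 in Ha.
  + case/lastP: B HdA => [|B y] HdA.
      have : rcons (rcons A u) b = rcons d w' by rewrite -Hd HdA -!cats1 -catA.
      move=> /rcons_inj [Ed Ew]; subst d w'.
      left; exists b, A; split => //=; by rewrite upd_eq.
    have : rcons (A ++ u :: b :: B) y = rcons d w' by rewrite -Hd HdA rcons_cat.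
    move=> /rcons_inj [Ed Ew]; subst d w'.
    right; left; exists b, A, B; split => //=; by rewrite upd_eq.
  + rewrite Hd in HdA; move/rcons_inj: HdA => [Ed Ew]; subst d w'.
    right; right; right; left; exists cc; split => //=; by rewrite upd_eq.
  + by rewrite Ha0 in Ha.
  + by right; right; right; right.
- have [Ep|Hp] := eqVneq p p0; last first.
    apply: Ph_frame Hs Hph _ _ Hstol _ => /=.
    + by rewrite upd_neq // eq_sym.
    + have [Eq|Hq] := eqVneq q p0.
        subst q; right; exists w', d; split => //; first by rewrite upd_eq.
        by rewrite mem_rcons mem_head.
      by left; rewrite upd_neq // eq_sym.
    + by left.
  subst p.
  case: Hph => [[n [A [Ha0 Hn HdA Hun]]]|[[b [A [B [HdA Hb Hun]]]]|[[A [cc [Ha0 HdA Hh]]]|[[cc [Ha0 Hh]]|Hlog]]]].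
  + by rewrite Ha0 in Ha.
  + by rewrite Hd in HdA; case: A HdA.
  + by rewrite Hd in HdA; case: A HdA.
  + by rewrite Ha0 in Ha.
  + by right; right; right; right.
Qed.

End P0.

Lemma Ph_steps p0 (s s3 : state) : steps G s s3 -> steps G s3 sf -> Inv s -> Ph p0 s -> Ph p0 s3.
Proof.
elim=> // s1 s2 s3' H12 H23 IH Hf Hs1 Hph; apply: IH => //.
  by move: (Inv_step Hfp Hs1 H12).
by move: (Ph_step Hs1 H12 (steps_trans H23 Hf) Hph).
Qed.

Lemma lemmaG : (exists p, steps G (init G p) sf) -> (forall z, z \in executed sf) ->
  exists p0 a b cc, log sf = a ++ (p0,u)::b /\ hist a p0 = rcons cc w.
Proof.
move=> [pi Hrun] Hall.
have [sa [sb [H1 H2 H3 H4 H5]]] := find_step Hrun (Hall v) (negbT (in_nil v)).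
have Hsa : Inv sa := Inv_steps Hfp (Inv_init Hfp pi) H1.
have Hsb : Inv sb := Inv_step Hfp Hsa H2.
case: H2 Hsa Hsb H3 H4 H5 => [s0 p z l' r Ha Hr Hl' Hc | s0 p z c Ha Hr Hnf He Hrc | s0 p z Ha Hr Hnf Hno | s0 p d w' Ha Hd | s0 p q w' d Ha Hd Hqp Hdq] Hsa Hsb H3 H4 H5.
- rewrite executed_rcons mem_rcons inE (negbTE H4) orbF in H5; move/eqP: H5 => Ez; subst z.
  have El := fork_children Hfp Hl' Hl; subst l'.
  have Er := cont_func Hfp Hc Hu; subst r.
  have Hph : Ph p (St (upd (asg s0) p (Some l)) (upd (dq s0) p (rcons (dq s0 p) u))
                     (rcons (log s0) (p, v)) (stolen s0)).
    left; exists l, (dq s0 p); split => /=; [by rewrite upd_eq | exact: connect0 | by rewrite upd_eq | ].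
    move=> m Hm Hlm; rewrite executed_rcons mem_rcons inE negb_or; apply/andP; split.
      apply/eqP => E; subst m; case: (fp_acyc Hfp (fut_edge Hl) (connect_cont_edge Hlm)).
    apply/negP => Hmex.
    have Hvm : connect edge v m := connect_trans (connect1 (fut_edge Hl)) (connect_cont_edge Hlm).
    by move: (asg_not_ex Hsa Ha); rewrite (closed_ex_connect Hsa Hvm Hmex).
  have := Ph_steps H3 (steps_refl _ _) Hsb Hph.
  have Hun : u \in executed sf := Hall u.
  case=> [[n [A [_ _ HdA _]]]|[[b [A [B [HdA _ _]]]]|[[A [cc [_ HdA _]]]|[[cc [Ha0 _]]|Hfin]]]].
  + by move: (dq_not_ex HIsf (p := p) (z := u)); rewrite HdA mem_rcons mem_head Hun => /(_ isT).
  + by move: (dq_not_ex HIsf (p := p) (z := u)); rewrite HdA mem_cat inE eqxx orbT Hun => /(_ isT).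
  + by move: (dq_not_ex HIsf (p := p) (z := u)); rewrite HdA mem_rcons mem_head Hun => /(_ isT).
  + by move: (asg_not_ex HIsf Ha0); rewrite Hun.
  + by exists p.
- rewrite executed_rcons mem_rcons inE (negbTE H4) orbF in H5; move/eqP: H5 => Ez; subst z.
  by case/negP: Hnf; apply/is_forkP; exists l.
- rewrite executed_rcons mem_rcons inE (negbTE H4) orbF in H5; move/eqP: H5 => Ez; subst z.
  by case/negP: Hnf; apply/is_forkP; exists l.
- by rewrite /= H5 in H4.
- by rewrite /= H5 in H4.
Qed.

End LemmaG.

End F.
Import F.

Module G.
Set Implicit Arguments. Unset Strict Implicit. Unset Printing Implicit Defensive.

Lemma imm_unique (T : eqType) (L A B A' B' : seq T) v1 e y :
  uniq L -> L = A ++ v1 :: y :: B -> L = A' ++ e :: y :: B' -> v1 = e.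
Proof.
move=> Hu E1 E2.
have Hs : forall A0 B0 v0, L = A0 ++ v0 :: y :: B0 -> index y L = (size A0).+1.
  move=> A0 B0 v0 E; move: Hu; rewrite E -cat_rcons cat_uniq => /and3P [_ H _].
  have Hy : y \notin rcons A0 v0 by move: H; apply: contra => Hy; rewrite /= Hy.
  by rewrite index_cat (negbTE Hy) /= eqxx addn0 size_rcons.
have Es : size A = size A' by have := Hs _ _ _ E1; rewrite (Hs _ _ _ E2) => -[].
have := congr1 (fun L => nth v1 L (size A)) E1; rewrite nth_cat ltnn subnn /=.
by rewrite E2 Es nth_cat ltnn subnn.
Qed.

Lemma hist1 (V : finType) (L : seq ('I_1 * V)) p : hist L p = map snd L.
Proof.
rewrite /C.hist; congr map; apply/all_filterP; apply/allP => z _.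
by rewrite [z.1]ord1 [p]ord1.
Qed.

Section Main.
Variables (V : finType) (G : fpdag V).
Hypothesis Hfp : future_parallel G.
Hypothesis Hss : structured_single_touch G.
Local Notation edge := (edge G).

Lemma complete_inv P (s : state V P) : complete_run G s ->
  [/\ Inv G s, exists p, steps G (init G p) s & forall z, z \in executed s].
Proof.
case=> p [H Hall]; split => //; last by exists p.
by move: (Inv_steps Hfp (Inv_init Hfp p) H).
Qed.

Lemma start_exists P (s : state V P) : Inv G s -> (forall z, z \in executed s) ->
  forall n, exists2 st, connect (cont G) st n & ~~ has_cont_pred G st.
Proof.
move=> Hs Hall n; move: {2}(index n (executed s)) (leqnn (index n (executed s))) => k.
elim: k n => [|k IH] n Hk.
  case: (boolP (has_cont_pred G n)) => [/existsP [m Hm]|Hn]; last by exists n.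
  by have := ord_ex Hs (cont_edge Hm) (Hall n); lia.
case: (boolP (has_cont_pred G n)) => [/existsP [m Hm]|Hn]; last by exists n.
have := ord_ex Hs (cont_edge Hm) (Hall n) => Hmn.
have [st H1 H2] := IH m (ltac:(lia)); exists st => //.
exact: connect_trans H1 (connect1 Hm).
Qed.

Lemma fork_of_tch P (s : state V P) f y : Inv G s -> (forall z, z \in executed s) ->
  tch G f y -> exists st v2 u2, [/\ connect (cont G) st f, fut G v2 st & cont G v2 u2].
Proof.
move=> Hs Hall Hfy.
have [st Hst Hnp] := start_exists Hs Hall f.
case/and3P: (tch_props Hfp Hfy) => Hfs _ _.
have [Er|Hnr] := eqVneq st (Defs.root G).
  subst st; have Ef := main_last Hfp Hst Hfs; subst f.
  by case: (outdeg_final Hfp (tch_edge Hfy)).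
have [v2 Hv2] := start_props Hfp Hnr Hnp.
have [_ [_ [u2 [Hu2 _ _]]]] := fork_props Hfp Hv2.
by exists st, v2, u2.
Qed.

Lemma fork_pkg v2 st u2 f y : fut G v2 st -> cont G v2 u2 -> connect (cont G) st f -> tch G f y ->
  [/\ ~~ has_cont_succ G f, (forall c, tch G f c -> c = y), connect edge u2 y & y != u2].
Proof.
move=> Hv2 Hu2 Hsf Hfy.
case/and3P: (tch_props Hfp Hfy) => Hfs Hfy' /existsP [g Hg].
have Hto : forall c g', tch G f c -> cont G g' c -> touch_of G st c.
  move=> c g' Hc Hg'; apply/existsP; exists f; apply/existsP; exists g'.
  case/and3P: (tch_props Hfp Hc) => _ -> _; by rewrite /same_thread Hsf Hc Hg'.
have [_ [x' /andP [Hx' Hdx']] Huniq] := Hss Hv2 Hu2.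
have Exy : x' = y := Huniq _ _ Hx' (Hto _ _ Hfy Hg).
subst x'; split => //.
- move=> c Hc; case/and3P: (tch_props Hfp Hc) => _ _ /existsP [g' Hg'].
  exact: Huniq _ _ (Hto _ _ Hc Hg') (Hto _ _ Hfy Hg).
- apply/eqP => E; subst y.
  have Ef := right_parent Hfp Hv2 Hu2 (tch_edge Hfy); subst f.
  by case: (cont_tch Hfp Hu2 Hfy).
Qed.

Lemma idx_before P (L a b : seq ('I_P * V)) p u w cc :
  uniq (map snd L) -> L = a ++ (p,u)::b -> hist a p = rcons cc w ->
  index w (map snd L) < index u (map snd L).
Proof.
move=> Hu E Hh; have Hw : w \in map snd a.
  have : w \in hist a p by rewrite Hh mem_rcons mem_head.
  rewrite /C.hist => /mapP [z Hz ->]; apply/mapP; exists z => //; by move: Hz; rewrite mem_filter => /andP [].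
move: Hu; rewrite E map_cat cat_uniq => /and3P [_ H _].
have Hu' : u \notin map snd a by move: H; apply: contra => Hy; rewrite /= Hy.
rewrite !index_cat Hw (negbTE Hu').
have := index_mem w (map snd a); rewrite Hw; lia.
Qed.

Lemma index_pre (T : eqType) (A B : seq T) z : z \in A -> index z (A ++ B) = index z A.
Proof. by move=> H; rewrite index_cat H. Qed.

Lemma touch_prev P (s : state V P) y f g a b p : Inv G s -> tch G f y -> cont G g y ->
  log s = a ++ (p,y)::b -> index f (executed s) < index g (executed s) ->
  exists cc, hist a p = rcons cc g.
Proof.
move=> Hs Hf Hg E Hlt.
have Hex : executed s = map snd a ++ y :: map snd b by rewrite /executed E map_cat.
case: (log_prov Hs E) => [Er|[[f' [Hf' Hfk]]|[cc [e [Hh He Hall]]]]].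
- by subst y; case: (indeg_root Hfp (cont_edge Hg)).
- case/(is_forkP G): Hfk => l' Hl'; case/negP: (right_not_touch Hfp Hl' Hf').
  by apply/(is_touchP Hfp); exists f, g.
- exists cc; case: (touch_parents Hfp Hf Hg He) => Ee; subst e => //.
  have [Hgin Hle] := Hall _ (cont_edge Hg).
  have [Hfin _] := Hall _ (tch_edge Hf).
  by move: Hlt; rewrite Hex !index_pre //; lia.
Qed.

Lemma touch_prev_conv P (s : state V P) y f g a b p cc : Inv G s -> tch G f y -> cont G g y ->
  log s = a ++ (p,y)::b -> hist a p = rcons cc g ->
  index f (executed s) < index g (executed s).
Proof.
move=> Hs Hf Hg E Hh.
have Hex : executed s = map snd a ++ y :: map snd b by rewrite /executed E map_cat.
have Hu : uniq (executed s) := ex_uniq Hs.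
case: (log_prov Hs E) => [Er|[[f' [Hf' Hfk]]|[cc' [e [Hh' He Hall]]]]].
- by subst y; case: (indeg_root Hfp (cont_edge Hg)).
- case/(is_forkP G): Hfk => l' Hl'; case/negP: (right_not_touch Hfp Hl' Hf').
  by apply/(is_touchP Hfp); exists f, g.
- rewrite Hh in Hh'; move/rcons_inj: Hh' => [_ Ee]; subst e.
  have [Hfin Hle] := Hall _ (tch_edge Hf).
  have [Hgin _] := Hall _ (cont_edge Hg).
  have Hfg : f != g by apply/eqP => E'; subst; case: (cont_tch Hfp Hg Hf).
  have Hne : index f (map snd a) != index g (map snd a).
    apply: contra Hfg => /eqP Ei; apply/eqP.
    by rewrite -(nth_index f Hfin) Ei (set_nth_default f) ?nth_index // index_mem.
  rewrite Hex !index_pre //; lia.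
Qed.

Lemma not_dev P o (s : state V P) y e : (forall v1, imm_before o v1 y -> v1 = e) ->
  (forall a b p, log s = a ++ (p,y)::b -> exists cc, hist a p = rcons cc e) ->
  ~ deviation o s y.
Proof.
move=> H1 H2 [v1 [Hi [a [b [p [E Hall]]]]]].
have Ev := H1 _ Hi; subst v1.
have [cc Hh] := H2 _ _ _ E; exact: Hall cc Hh.
Qed.

Lemma seq_imm (s1 : state V 1) a b p y cc e : Inv G s1 ->
  log s1 = a ++ (p,y)::b -> hist a p = rcons cc e ->
  imm_before (executed s1) e y /\ (forall v1, imm_before (executed s1) v1 y -> v1 = e).
Proof.
move=> Hs E Hh; rewrite hist1 in Hh.
have Hex : executed s1 = cc ++ e :: y :: map snd b.
  by rewrite /executed E map_cat Hh /= cat_rcons.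
split; first by exists cc, (map snd b).
move=> v1 [A [B EA]]; apply: (imm_unique (ex_uniq Hs) EA Hex).
Qed.

End Main.

End G.
Import G.

Set Implicit Arguments. Unset Strict Implicit. Unset Printing Implicit Defensive.

Theorem mainTheorem2 (V : finType) (G : fpdag V) (P : nat)
    (s1 : state V 1) (s : state V P) (v l u x : V) :
  future_parallel G -> structured_single_touch G -> 0 < P ->
  complete_run G s1 -> complete_run G s ->
  fut G v l -> cont G v u -> touch_of G l x ->
  deviation (executed s1) s x \/ deviation (executed s1) s u ->
  u \in stolen s \/
  exists y, [&& same_thread G l y & is_touch G y] /\ deviation (executed s1) s y.
Proof.
move=> Hfp Hss _ Hc1 Hc Hl Hu Htx Hdev.
have [Hs1 Hrun1 Hall1] := complete_inv Hfp Hc1.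
have [Hs Hrun Hall] := complete_inv Hfp Hc.
case/existsP: Htx => w /existsP [g /and4P [Hlw Hwx _ Hgx]].
have Hlnp := left_no_pred Hfp Hl.
have Hlw' : connect (cont G) l w := same_thread_start Hlnp Hlw.
have [Hws Hsingle Hux Hxu] := fork_pkg Hfp Hss Hl Hu Hlw' Hwx.
have Hstol1 : stolen s1 = [::].
  by case: Hrun1 => p Hp; apply: (P1_stolen Hp).
have NS : forall y f g', tch G f y -> cont G g' y ->
    index f (executed s1) < index g' (executed s1).
  suff H : forall n y, index y (executed s1) < n -> forall f g', tch G f y -> cont G g' y ->
      index f (executed s1) < index g' (executed s1).
    by move=> y; apply: (H (index y (executed s1)).+1).
  elim=> [//|n IH] y Hyn f g' Hf Hg'.
  have [st [v2 [u2 [Hstf Hv2 Hu2]]]] := fork_of_tch Hfp Hs1 Hall1 Hf.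
  have [Hfs Hsing Huy Hyu] := fork_pkg Hfp Hss Hv2 Hu2 Hstf Hf.
  have Hfy : index f (executed s1) < index y (executed s1) := ord_ex Hs1 (tch_edge Hf) (Hall1 y).
  have Hns2 : forall y' f' g'', connect (cont G) st y' -> tch G f' y' -> cont G g'' y' ->
      index f' (executed s1) < index g'' (executed s1).
    move=> y' f' g'' Hy' Hf' Hg''; apply: (IH y') Hf' Hg''.
    have Hy'f : connect (edge G) y' f.
      case/orP: (cont_total Hfp Hy' Hstf) => H; first exact: connect_cont_edge.
      have [E|Hne] := eqVneq f y'; first by rewrite E connect0.
      have [d Hd _] := connect_front H Hne; by case/negP: Hfs; apply/existsP; exists d.
    exact: leq_ltn_trans (ord_connect Hs1 Hy'f (Hall1 f)) (leq_trans Hfy (ltnSE Hyn)).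
  have Hst2 : u2 \notin stolen s1 by rewrite Hstol1.
  have [p0 [a [b [cc [E Hh]]]]] := lemmaG Hfp Hv2 Hu2 Hstf Hfs Hsing Huy Hyu Hs1 Hns2 Hst2 Hrun1 Hall1.
  have Hfu : index f (executed s1) < index u2 (executed s1) := idx_before (ex_uniq Hs1) E Hh.
  have Huy' : u2 != y by rewrite eq_sym.
  have [q Huq Hqy] := connect_back Huy Huy'.
  case: (touch_parents Hfp Hf Hg' Hqy) => Eq; subst q.
    by have := leq_ltn_trans (ord_connect Hs1 Huq (Hall1 f)) Hfu; rewrite ltnn.
  exact: leq_trans Hfu (ord_connect Hs1 Huq (Hall1 g')).
have Hst1 : u \notin stolen s1 by rewrite Hstol1.
have [p1 [a1 [b1 [cc1 [E1 Hh1]]]]] :=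
  lemmaG Hfp Hl Hu Hlw' Hws Hsingle Hux Hxu Hs1 (fun y f g' _ => NS y f g') Hst1 Hrun1 Hall1.
have Hwu1 : index w (executed s1) < index u (executed s1) := idx_before (ex_uniq Hs1) E1 Hh1.
have [_ Huniq_u] := seq_imm Hs1 E1 Hh1.
have Hug : connect (edge G) u g.
  have Hux' : u != x by rewrite eq_sym.
  have [q Huq Hqx] := connect_back Hux Hux'.
  case: (touch_parents Hfp Hwx Hgx Hqx) => Eq; subst q => //.
  by have := leq_ltn_trans (ord_connect Hs1 Huq (Hall1 w)) Hwu1; rewrite ltnn.
have Hwg1 : index w (executed s1) < index g (executed s1).
  exact: leq_trans Hwu1 (ord_connect Hs1 Hug (Hall1 g)).
have [a2 [b2 [p2 E2]]] := decomp_exists (Hall1 x).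
have [cc2 Hh2] := touch_prev Hfp Hs1 Hwx Hgx E2 Hwg1.
have [_ Huniq_x] := seq_imm Hs1 E2 Hh2.
case: (boolP (u \in stolen s)) => Hus; first by left.
right; apply: NNPP => Hno.
have Hnd : forall y, same_thread G l y -> is_touch G y -> ~ deviation (executed s1) s y.
  by move=> y H1 H2 Hd; apply: Hno; exists y; rewrite H1 H2.
have Hnsp : forall y f g', connect (cont G) l y -> tch G f y -> cont G g' y ->
    index f (executed s) < index g' (executed s).
  move=> y f g' Hy Hf Hg'.
  have [a3 [b3 [p3 E3]]] := decomp_exists (Hall y).
  have [a4 [b4 [p4 E4]]] := decomp_exists (Hall1 y).
  have [cc4 Hh4] := touch_prev Hfp Hs1 Hf Hg' E4 (NS _ _ _ Hf Hg').
  have [Himm4 _] := seq_imm Hs1 E4 Hh4.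
  have Hty : is_touch G y by apply/(is_touchP Hfp); exists f, g'.
  have Hsty : same_thread G l y by rewrite /same_thread Hy.
  have Hnd' := Hnd y Hsty Hty.
  have [cc3 Hh3] : exists cc, hist a3 p3 = rcons cc g'.
    apply: NNPP => Hne; apply: Hnd'; exists g'; split => //.
    exists a3, b3, p3; split => // cc Hcc; apply: Hne; by exists cc.
  by move: (touch_prev_conv Hfp Hs Hf Hg' E3 Hh3).
have [p5 [a5 [b5 [cc5 [E5 Hh5]]]]] :=
  lemmaG Hfp Hl Hu Hlw' Hws Hsingle Hux Hxu Hs Hnsp Hus Hrun Hall.
have Hwu : index w (executed s) < index u (executed s) := idx_before (ex_uniq Hs) E5 Hh5.
case: Hdev.
- apply: (not_dev (e := g)) => // a b p E; apply: (touch_prev Hfp Hs Hwx Hgx E).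
  exact: leq_trans Hwu (ord_connect Hs Hug (Hall g)).
- apply: (not_dev (e := w)) => // a b p E.
  have [Ea Ep] := decomp_unique (ex_uniq Hs) E E5; subst a p; by exists cc5.
Qed.
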